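(* Let $G$ be a group and let $S_1,\dots,S_m\subset F$ be finitely many subsets such that each $S_i$ is a set of weak identities in $G$ of height $n_i$. Then $\bigcup_{i=1}^m S_i$ is a set of weak identities in $G$ of height at most $\sum_{i=1}^m n_i$ (i.e. the defining property holds with $N=\sum_i n_i$).
   Context: Let $F$ be the free group on countably many generators $g_1,g_2,\dots$. For $N\ge1$, $F^{\times N}$ is the direct product of $N$ copies of $F$, $i_k:F\to F^{\times N}$ the $k$-th inclusion. A subset $S\subset F$ is a set of weak identities in $G$ of height $N$ if for any $s_1,\dots,s_N\in S$ and any homomorphism $\rho:F^{\times N}\to G$ there is $k\in\{1,\dots,N\}$ with $\rho(i_k(s_k))=1$; $S$ is a set of weak identities if this holds for some $N\ge1$. *)

(* Defs.v *)
From Stdlib Require Import Relations.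
From mathcomp Require Import all_boot.
Set Implicit Arguments. Unset Strict Implicit. Unset Printing Implicit Defensive.

Record group := Group {
  gcar :> Type;
  gmul : gcar -> gcar -> gcar;
  gone : gcar;
  ginv : gcar -> gcar;
  gmulA : forall x y z, gmul x (gmul y z) = gmul (gmul x y) z;
  gmul1 : forall x, gmul gone x = x;
  gmulV : forall x, gmul (ginv x) x = gone
}.

(* The free group F on countably many generators g_0, g_1, ... :
   words in letters (i, true) = g_i and (i, false) = g_i^{-1},
   taken modulo free reduction.  Group law = concatenation. *)
Definition letter := (nat * bool)%type.
Definition word := seq letter.

Inductive red1 : word -> word -> Prop :=
  | red1_intro (u v : word) (i : nat) (b : bool) :
      red1 (u ++ (i, b) :: (i, ~~ b) :: v) (u ++ v).

Definition wequiv : word -> word -> Prop := clos_refl_sym_trans word red1.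

(* Elements of F^{x N} are N-tuples of words (componentwise equivalence,
   componentwise concatenation). *)
Definition is_hom (N : nat) (G : group) (rho : ('I_N -> word) -> G) : Prop :=
  (forall x y : 'I_N -> word, (forall k, wequiv (x k) (y k)) -> rho x = rho y) /\
  (forall x y : 'I_N -> word, rho (fun k => x k ++ y k) = gmul (rho x) (rho y)).

Definition incl (N : nat) (k : 'I_N) (s : word) : 'I_N -> word :=
  fun j => if j == k then s else [::].

Definition weak_identities_height (G : group) (S : word -> Prop) (N : nat) : Prop :=
  1 <= N /\
  forall s : 'I_N -> word, (forall k, S (s k)) ->
  forall rho : ('I_N -> word) -> G, is_hom rho ->
  exists k : 'I_N, rho (incl k (s k)) = gone G.

(* Main.v *)
Require Import Defs.
From mathcomp Require Import all_boot.
From Stdlib Require ClassicalEpsilon Relations.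
Import ClassicalEpsilon Relations.

Lemma restrict_hom (G : group) (N M : nat) (g : 'I_M -> 'I_N) (ginj : injective g)
  (rho : ('I_N -> word) -> G) : is_hom rho ->
  let y := fun (x : 'I_M -> word) (k : 'I_N) =>
     match [pick j | g j == k] with Some j => x j | None => [::] end in
  is_hom (fun x => rho (y x)).
Proof.
move=> [H1 H2] y; split.
- move=> x x' Hx; apply: H1 => k; rewrite /y; case: pickP => [j _|_].
  + exact: Hx.
  + exact: rst_refl _ _.
- move=> x x'; rewrite -H2; apply: H1 => k; rewrite /y.
  case: pickP => [j _|_]; exact: rst_refl _ _.
Qed.

Theorem corollary2p3 (G : group) (m : nat) (S : 'I_m -> word -> Prop)
  (n : 'I_m -> nat) :
  0 < m ->
  (forall i : 'I_m, weak_identities_height G (S i) (n i)) ->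
  weak_identities_height G (fun w => exists i : 'I_m, S i w) (\sum_(i < m) n i).
Proof.
move=> m0 HS.
split.
  case: m m0 S n HS => // m' _ S n HS.
  rewrite big_ord_recl; case: (HS ord0) => h _; apply: leq_trans h _; exact: leq_addr.
move=> s Hs rho Hrho.
pose f k := proj1_sig (constructive_indefinite_description _ (Hs k)).
have Hf : forall k, S (f k) (s k).
  move=> k; exact: (proj2_sig (constructive_indefinite_description _ (Hs k))).
have [i Hi] : exists i, n i <= #|[pred k | f k == i]|.
  apply/existsP; apply: contraT; rewrite negb_exists => /forallP Hall.
  have Hc : forall i, #|[pred k | f k == i]|.+1 <= n i.
    by move=> i; move: (Hall i); rewrite -ltnNge.
  have : \sum_(i < m) #|[pred k | f k == i]|.+1 <= \sum_(i < m) n i.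
    by apply: leq_sum => j _; exact: Hc.
  have Hsum : \sum_(i < m) #|[pred k | f k == i]| = \sum_(i < m) n i.
    transitivity #|'I_(\sum_(i < m) n i)|; last by rewrite card_ord.
    rewrite -sum1_card (partition_big f xpredT) //=.
    by apply: eq_bigr => j _; rewrite sum1_card.
  under eq_bigr => j _ do rewrite -addn1.
  rewrite big_split /= sum1_card card_ord Hsum.
  set X := (X in X + m <= X).
  move=> H; have : X + m <= X + 0 by rewrite addn0.
  by rewrite leq_add2l leqn0 => /eqP Hm; rewrite Hm in m0.
set A := [pred k | f k == i] in Hi.
pose g (j : 'I_(n i)) : 'I_(\sum_(i < m) n i) := enum_val (widen_ord Hi j).
have ginj : injective g.
  move=> a b /enum_val_inj /(congr1 val) /= H; exact: val_inj.
have gA : forall j, f (g j) = i.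
  move=> j; have := enum_valP (widen_ord Hi j); rewrite /A /= => /eqP; exact.
have Hr := @restrict_hom G _ _ g ginj rho Hrho.
case: (HS i) => _ Hw.
have [j Hj] := Hw (fun j => s (g j)) (fun j => eq_rect _ (fun a => S a _) (Hf (g j)) _ (gA j)) _ Hr.
exists (g j); rewrite -Hj; apply: (proj1 Hrho) => k.
rewrite /incl /=; case: pickP.
  move=> j' /eqP Hj'; rewrite -Hj' (inj_eq ginj); exact: rst_refl _ _.
move=> Hn; case: eqP => [Hk|]; last by move=> _; exact: rst_refl _ _.
by move: (Hn j); rewrite Hk /= eqxx.
Qed.
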